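(* Let $\mathcal{C}$ be a bicomplete category with splitting coproducts and disjoint coproducts. Then every cofibration $c:A\to B$ of the generalized core model structure on $\mathcal{C}$ is isomorphic (as an object under $A$) to a canonical coproduct inclusion $i_1:A\to A\sqcup X$ for some object $X$; i.e. there is an isomorphism $\phi:B\to A\sqcup X$ with $\phi c=i_1$.
   Context: Bicomplete means having all finite limits and finite colimits. The generalized core model structure on $\mathcal{C}$ has weak equivalences the morphisms $f:A\to B$ for which some morphism $B\to A$ exists, cofibrations the morphisms having the left lifting property against all retractions (morphisms $r$ with $rs=1$ for some $s$), and fibrations the morphisms having the right lifting property against all cofibrations that are weak equivalences. Splitting coproducts: every $f:X\to A\sqcup B$ is isomorphic to $f_L\sqcup f_R$ for some $f_L:X_L\to A$, $f_R:X_R\to B$ with $X\cong X_L\sqcup X_R$. Disjoint coproducts: coproduct injections are monic, the pullback of $i_1:A\to A\sqcup B$ and $i_2:B\to A\sqcup B$ is the initial object, and the pullback of $i_1$ along itself (resp. $i_2$ along itself) is $A$ (resp. $B$) with identity maps. *)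

(* Defs.v *)
Set Implicit Arguments.
Unset Strict Implicit.

Record Category := {
  Ob :> Type;
  Hom : Ob -> Ob -> Type;
  comp : forall a b c : Ob, Hom b c -> Hom a b -> Hom a c;
  idm : forall a : Ob, Hom a a;
  comp_assoc : forall (a b c d : Ob) (f : Hom a b) (g : Hom b c) (h : Hom c d),
      comp h (comp g f) = comp (comp h g) f;
  comp_id_l : forall (a b : Ob) (f : Hom a b), comp (idm b) f = f;
  comp_id_r : forall (a b : Ob) (f : Hom a b), comp f (idm a) = f
}.

Arguments Hom {c} _ _ : rename.
Arguments comp {c0 a b c} _ _ : rename.
Arguments idm {c} _ : rename.

Section Notions.
Variable C : Category.

Definition IsIso (a b : C) (f : Hom a b) : Prop :=
  exists g : Hom b a, comp g f = idm a /\ comp f g = idm b.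

Definition Monic (a b : C) (f : Hom a b) : Prop :=
  forall (z : C) (g h : Hom z a), comp f g = comp f h -> g = h.

Definition Retraction (a b : C) (r : Hom a b) : Prop :=
  exists s : Hom b a, comp r s = idm b.

Definition LLP (a b x y : C) (i : Hom a b) (p : Hom x y) : Prop :=
  forall (u : Hom a x) (v : Hom b y), comp p u = comp v i ->
    exists h : Hom b x, comp h i = u /\ comp p h = v.

Definition CoreCofibration (a b : C) (c : Hom a b) : Prop :=
  forall (x y : C) (r : Hom x y), Retraction r -> LLP c r.

Definition IsInitial (i : C) : Prop :=
  forall x : C, exists f : Hom i x, forall g : Hom i x, g = f.

Definition IsTerminal (t : C) : Prop :=
  forall x : C, exists f : Hom x t, forall g : Hom x t, g = f.

Definition IsCoproduct (a b s : C) (i1 : Hom a s) (i2 : Hom b s) : Prop :=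
  forall (z : C) (f : Hom a z) (g : Hom b z),
    exists h : Hom s z, comp h i1 = f /\ comp h i2 = g /\
      forall h' : Hom s z, comp h' i1 = f -> comp h' i2 = g -> h' = h.

Definition IsProduct (a b p : C) (p1 : Hom p a) (p2 : Hom p b) : Prop :=
  forall (z : C) (f : Hom z a) (g : Hom z b),
    exists h : Hom z p, comp p1 h = f /\ comp p2 h = g /\
      forall h' : Hom z p, comp p1 h' = f -> comp p2 h' = g -> h' = h.

Definition IsEqualizer (a b e : C) (f g : Hom a b) (m : Hom e a) : Prop :=
  comp f m = comp g m /\
  forall (z : C) (k : Hom z a), comp f k = comp g k ->
    exists h : Hom z e, comp m h = k /\ forall h' : Hom z e, comp m h' = k -> h' = h.

Definition IsCoequalizer (a b q : C) (f g : Hom a b) (m : Hom b q) : Prop :=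
  comp m f = comp m g /\
  forall (z : C) (k : Hom b z), comp k f = comp k g ->
    exists h : Hom q z, comp h m = k /\ forall h' : Hom q z, comp h' m = k -> h' = h.

Definition IsPullback (a b s p : C) (f : Hom a s) (g : Hom b s)
    (q1 : Hom p a) (q2 : Hom p b) : Prop :=
  comp f q1 = comp g q2 /\
  forall (z : C) (u : Hom z a) (v : Hom z b), comp f u = comp g v ->
    exists h : Hom z p, comp q1 h = u /\ comp q2 h = v /\
      forall h' : Hom z p, comp q1 h' = u -> comp q2 h' = v -> h' = h.

Definition HasFiniteLimits : Prop :=
  (exists t : C, IsTerminal t) /\
  (forall a b : C, exists (p : C) (p1 : Hom p a) (p2 : Hom p b), IsProduct p1 p2) /\
  (forall (a b : C) (f g : Hom a b), exists (e : C) (m : Hom e a), IsEqualizer f g m).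

Definition HasFiniteColimits : Prop :=
  (exists i : C, IsInitial i) /\
  (forall a b : C, exists (s : C) (i1 : Hom a s) (i2 : Hom b s), IsCoproduct i1 i2) /\
  (forall (a b : C) (f g : Hom a b), exists (q : C) (m : Hom b q), IsCoequalizer f g m).

Definition Bicomplete : Prop := HasFiniteLimits /\ HasFiniteColimits.

(* Splitting coproducts: every f : X -> A ⊔ B is isomorphic (over A ⊔ B)
   to f_L ⊔ f_R : X_L ⊔ X_R -> A ⊔ B. *)
Definition SplittingCoproducts : Prop :=
  forall (a b s : C) (i1 : Hom a s) (i2 : Hom b s), IsCoproduct i1 i2 ->
  forall (x : C) (f : Hom x s),
    exists (xl xr p : C) (fl : Hom xl a) (fr : Hom xr b)
           (j1 : Hom xl p) (j2 : Hom xr p) (theta : Hom p x),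
      IsCoproduct j1 j2 /\ IsIso theta /\
      comp f (comp theta j1) = comp i1 fl /\
      comp f (comp theta j2) = comp i2 fr.

Definition DisjointCoproducts : Prop :=
  forall (a b s : C) (i1 : Hom a s) (i2 : Hom b s), IsCoproduct i1 i2 ->
    Monic i1 /\ Monic i2 /\
    (forall (p : C) (q1 : Hom p a) (q2 : Hom p b), IsPullback i1 i2 q1 q2 -> IsInitial p) /\
    IsPullback i1 i1 (idm a) (idm a) /\
    IsPullback i2 i2 (idm b) (idm b).

End Notions.

(* Main.v *)
Require Import Defs.

Section H.
Variable C : Category.

Lemma iso_monic (a b : C) (f : Hom a b) : IsIso f -> Monic f.
Proof.
  intros [g [H1 H2]] z u v E.
  rewrite <- (comp_id_l u), <- (comp_id_l v), <- H1, <- !comp_assoc, E. reflexivity.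
Qed.

Lemma monic_comp (a b d : C) (f : Hom a b) (g : Hom b d) :
  Monic f -> Monic g -> Monic (comp g f).
Proof.
  intros Hf Hg z u v E. apply Hf, Hg. rewrite !comp_assoc. exact E.
Qed.

Lemma monic_fst (a b d : C) (f : Hom a b) (g : Hom b d) :
  Monic (comp g f) -> Monic f.
Proof.
  intros H z u v E. apply H. rewrite <- !comp_assoc, E. reflexivity.
Qed.

Lemma cop_uniq (a b s : C) (i1 : Hom a s) (i2 : Hom b s) :
  IsCoproduct i1 i2 -> forall z (h k : Hom s z),
  comp h i1 = comp k i1 -> comp h i2 = comp k i2 -> h = k.
Proof.
  intros Hc z h k E1 E2.
  destruct (Hc z (comp k i1) (comp k i2)) as [m [_ [_ U]]].
  rewrite (U h E1 E2). symmetry. apply U; reflexivity.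
Qed.
End H.
Arguments iso_monic {C a b f}.
Arguments monic_comp {C a b d f g}.
Arguments monic_fst {C a b d f g}.
Arguments cop_uniq {C a b s i1 i2}.

Theorem proposition5 (C : Category)
    (Hbic : Bicomplete C) (Hsplit : SplittingCoproducts C) (Hdisj : DisjointCoproducts C)
    (a b : C) (c : Hom a b) (Hc : CoreCofibration c) :
  exists (x s : C) (i1 : Hom a s) (i2 : Hom x s) (phi : Hom b s),
    IsCoproduct i1 i2 /\ IsIso phi /\ comp phi c = i1.
Proof.
  destruct Hbic as [[_ [Hprod Heq]] [_ [Hcop _]]].
  destruct (Hcop a b) as [S [j1 [j2 HS]]].
  destruct (Hdisj _ _ _ _ _ HS) as [Mj1 [Mj2 [Hpb _]]].
  destruct (HS b c (idm b)) as [r [Hr1 [Hr2 _]]].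
  assert (Hret : Retraction r) by (exists j2; exact Hr2).
  destruct (Hc _ _ r Hret j1 (idm b)) as [h [Hh1 Hh2]].
  { rewrite Hr1, comp_id_l. reflexivity. }
  destruct (Hsplit _ _ _ _ _ HS _ h) as
    [xl [xr [P [fl [fr [k1 [k2 [th [HP [Hth [E1 E2]]]]]]]]]]].
  destruct Hth as [thi [Tl Tr]].
  destruct (Hdisj _ _ _ _ _ HP) as [Mk1 [Mk2 _]].
  destruct (Hsplit _ _ _ _ _ HP _ (comp thi c)) as
    [al [ar [Q [gl [gr [m1 [m2 [ps [HQ [Hps [F1 F2]]]]]]]]]]].
  pose proof (iso_monic Hps) as Mps.
  destruct Hps as [psi [Pl Pr]].
  destruct (Hdisj _ _ _ _ _ HQ) as [Mm1 [Mm2 _]].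
  destruct (Hprod a b) as [Pr0 [p1 [p2 Hpr]]].
  destruct (Heq _ _ (comp j1 p1) (comp j2 p2)) as [E [e [He1 He2]]].
  assert (HPB : IsPullback j1 j2 (comp p1 e) (comp p2 e)).
  { split. { rewrite !comp_assoc. exact He1. }
    intros z u v Euv.
    destruct (Hpr z u v) as [kk [K1 [K2 KU]]].
    destruct (He2 z kk) as [hh [HH HU]].
    { rewrite <- !comp_assoc, K1, K2. exact Euv. }
    exists hh. rewrite <- !comp_assoc, HH. split; [exact K1|split; [exact K2|]].
    intros h' H1 H2. apply HU. apply KU; rewrite comp_assoc; assumption. }
  pose proof (Hpb _ _ _ HPB) as Einit.
  assert (Ecomm : comp j1 (comp ps m2) = comp j2 (comp fr gr)).
  { rewrite <- Hh1.
    transitivity (comp h (comp th (comp (comp thi c) (comp ps m2)))).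
    { rewrite !comp_assoc, <- (comp_assoc thi th h), Tr, comp_id_r. reflexivity. }
    rewrite F2, (comp_assoc gr k2 th), (comp_assoc gr (comp th k2) h), E2, comp_assoc. reflexivity. }
  destruct (proj2 HPB _ _ _ Ecomm) as [w [W1 [W2 _]]].
  assert (Mw : Monic w).
  { apply (monic_fst (g:=comp p1 e)). rewrite W1.
    apply monic_comp; assumption. }
  destruct (Einit ar) as [t Ht].
  assert (Htw : comp t w = idm ar).
  { apply Mw. rewrite comp_assoc, comp_id_r.
    destruct (Einit E) as [ie Hie].
    rewrite (Hie (comp w t)), <- (Hie (idm E)), comp_id_l. reflexivity. }
  assert (ArU : forall z (f g : Hom ar z), f = g).
  { intros z f g.
    rewrite <- (comp_id_r f), <- (comp_id_r g), <- Htw, !comp_assoc.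
    destruct (Einit z) as [iz Hiz]. rewrite (Hiz (comp f t)), (Hiz (comp g t)).
    reflexivity. }
  destruct (Einit xl) as [txl _].
  destruct (HQ xl gl (comp txl w)) as [q [Q1 _]].
  set (g := comp q psi).
  assert (Hg : comp th (comp k1 g) = c).
  { assert (comp (comp th (comp k1 g)) ps = comp c ps).
    { apply (cop_uniq HQ).
      - unfold g. rewrite <- !comp_assoc, (comp_assoc m1 ps psi), Pl, comp_id_l, Q1.

        rewrite <- F1, !comp_assoc, Tr, comp_id_l. reflexivity.
      - apply ArU. }
    rewrite <- (comp_id_r (comp th (comp k1 g))), <- (comp_id_r c), <- Pr,
      !comp_assoc. rewrite !comp_assoc in H. rewrite H. reflexivity. }
  assert (G1 : comp fl g = idm a).
  { apply Mj1. rewrite comp_id_r, comp_assoc, <- E1, <- Hh1.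
    rewrite <- Hg, !comp_assoc. reflexivity. }
  assert (G2 : comp g fl = idm xl).
  { assert (Mthk : Monic (comp th k1)).
    { apply monic_comp; [assumption|]. apply iso_monic. exists thi. split; assumption. }
    apply Mthk. rewrite comp_id_r.
    transitivity (comp c fl).
    { rewrite <- Hg, !comp_assoc. reflexivity. }
    rewrite <- Hr1, <- comp_assoc, <- E1, !comp_assoc, Hh2, comp_id_l. reflexivity. }
  exists xr, P, (comp k1 g), k2, thi.
  split; [|split].
  - intros z f1 f2.
    destruct (HP z (comp f1 fl) f2) as [m [M1 [M2 MU]]].
    exists m. split; [|split; [exact M2|]].
    + rewrite comp_assoc, M1, <- comp_assoc, G1, comp_id_r. reflexivity.
    + intros h' H1 H2. apply MU; [|exact H2].
      rewrite <- H1, <- (comp_id_r (comp h' k1)), <- G2, !comp_assoc. reflexivity.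
  - exists th. split; assumption.
  - rewrite <- Hg, !comp_assoc, Tl, comp_id_l. reflexivity.
Qed.
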